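(* Let $\mathfrak{g}$ be a connected soluble ranked Lie ring such that $\mathfrak{g}'$ is nilpotent. Then the Frattini subring $\Phi(\mathfrak{g})$ is an ideal of $\mathfrak{g}$.
   Context: A ranked Lie ring is a Lie ring definable in a structure of finite Morley rank; connected means no proper definable subgroup of finite index. The Frattini subring $\Phi(\mathfrak{g})$ of a connected ranked Lie ring $\mathfrak{g}$ is the intersection of all proper definable connected subrings of $\mathfrak{g}$ that are maximal among proper definable connected subrings. *)

(* Defs.v *)
(* Lie rings on a zmodType; "ranked" via the Borovik-Poizat
   rank axioms on the definable sets of the (induced) structure. *)
From HB Require Import structures.
From mathcomp Require Import all_boot all_order all_algebra.
Set Implicit Arguments. Unset Strict Implicit. Unset Printing Implicit Defensive.
Import GRing.Theory.
Local Open Scope ring_scope.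

Section LieDefs.
Variable V : zmodType.
Variable br : V -> V -> V.

Definition lie_ring : Prop :=
  [/\ forall x y z, br (x + y) z = br x z + br y z,
      forall x y z, br x (y + z) = br x y + br x z,
      forall x, br x x = 0 &
      forall x y z, br x (br y z) + br y (br z x) + br z (br x y) = 0].

Definition subgrp (H : V -> Prop) : Prop :=
  H 0 /\ forall x y, H x -> H y -> H (x - y).

Definition subring (H : V -> Prop) : Prop :=
  subgrp H /\ forall x y, H x -> H y -> H (br x y).

Definition ideal (H : V -> Prop) : Prop :=
  subgrp H /\ forall x y, H y -> H (br x y).

Definition bracket_span (A B : V -> Prop) : V -> Prop :=
  fun z => forall K, subgrp K -> (forall a b, A a -> B b -> K (br a b)) -> K z.

Fixpoint derived (n : nat) : V -> Prop :=
  match n with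
  | 0 => fun _ => True
  | n'.+1 => bracket_span (derived n') (derived n')
  end.

Definition soluble : Prop := exists n, forall x, derived n x -> x = 0.

(* lower central series of a sub-Lie-ring H: gamma_1 = H, gamma_{n+1} = [H, gamma_n] *)
Fixpoint lcs (H : V -> Prop) (n : nat) : V -> Prop :=
  match n with
  | 0 => H
  | n'.+1 => bracket_span H (lcs H n')
  end.

Definition nilpotent (H : V -> Prop) : Prop := exists n, forall x, lcs H n x -> x = 0.

Definition finite_index (K H : V -> Prop) : Prop :=
  exists s : seq V, forall x, H x -> exists a, a \in s /\ K (x - a).

End LieDefs.

(* A definable set of arity k is a predicate on seq V all of whose members
   have size k. *)
Record ranked_structure (V : zmodType) (br : V -> V -> V) := RankedStructure {
  Def : nat -> (seq V -> Prop) -> Prop;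
  rk : (seq V -> Prop) -> nat;
  Def_size : forall k A s, Def k A -> A s -> size s = k;
  Def_ext : forall k (A B : seq V -> Prop), Def k A -> (forall s, A s <-> B s) -> Def k B;
  Def_full : forall k, Def k (fun s => size s = k);
  Def_inter : forall k A B, Def k A -> Def k B -> Def k (fun s => A s /\ B s);
  Def_compl : forall k A, Def k A -> Def k (fun s => size s = k /\ ~ A s);
  Def_prod : forall k m A B, Def k A -> Def m B ->
     Def (k + m) (fun s => size s = (k + m)%N /\ A (take k s) /\ B (drop k s));
  Def_proj : forall k m A, Def (k + m) A ->
     Def k (fun s => size s = k /\ exists t, A (s ++ t));
  Def_reindex : forall n m (f : 'I_n -> 'I_m) A, Def n A ->
     Def m (fun s => size s = m /\ A [seq nth 0 s (f i) | i <- enum 'I_n]);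
  Def_eq : Def 2 (fun s => exists x, s = [:: x; x]);
  Def_const : forall a : V, Def 1 (fun s => s = [:: a]);
  Def_add : Def 3 (fun s => exists x y, s = [:: x; y; x + y]);
  Def_br : Def 3 (fun s => exists x y, s = [:: x; y; br x y]);
  (* Borovik-Poizat rank axioms (rank of nonempty definable sets) *)
  rk_mono : forall k A n, Def k A -> (exists s, A s) ->
     ((n < rk A)%N <->
      exists B : nat -> seq V -> Prop,
        (forall i, [/\ Def k (B i), exists s, B i s,
                       forall s, B i s -> A s & (n <= rk (B i))%N]) /\
        (forall i j s, i <> j -> B i s -> B j s -> False));
  rk_definable : forall k m D n, Def (k + m) D ->
     Def k (fun b => [/\ size b = k, exists c, D (b ++ c) & rk (fun c => D (b ++ c)) = n]);
  rk_unif_finite : forall k m D, Def (k + m) D ->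
     exists N : nat, forall b, size b = k ->
       (exists s : seq (seq V), forall c, D (b ++ c) -> c \in s) ->
       exists s : seq (seq V), (size s <= N)%N /\ forall c, D (b ++ c) -> c \in s;
  rk_add : forall k m A G n, Def k A -> Def (k + m) G ->
     (forall a, size a = k -> A a -> exists c, G (a ++ c)) ->
     (forall a c, size a = k -> G (a ++ c) -> A a) ->
     (forall a c c', size a = k -> G (a ++ c) -> G (a ++ c') -> c = c') ->
     (forall c, size c = m -> (exists a, size a = k /\ G (a ++ c)) ->
        rk (fun a => size a = k /\ G (a ++ c)) = n) ->
     (exists a, A a) ->
     rk A = (rk (fun c => size c = m /\ exists a, size a = k /\ G (a ++ c)) + n)%N
}.

Section Ranked.
Variable V : zmodType.
Variable br : V -> V -> V.
Variable D : ranked_structure br.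

Definition definable (H : V -> Prop) : Prop :=
  Def D 1 (fun s => exists x, s = [:: x] /\ H x).

Definition connected (H : V -> Prop) : Prop :=
  forall K, definable K -> subgrp K -> (forall x, K x -> H x) ->
    finite_index K H -> forall x, H x -> K x.

Definition def_conn_subring (H : V -> Prop) : Prop :=
  [/\ definable H, subring br H & connected H].

Definition proper (H : V -> Prop) : Prop := exists y, ~ H y.

Definition maximal_def_conn (M : V -> Prop) : Prop :=
  [/\ def_conn_subring M, proper M &
      forall N, def_conn_subring N -> proper N -> (forall x, M x -> N x) ->
        forall x, N x -> M x].

Definition frattini : V -> Prop :=
  fun x => forall M, maximal_def_conn M -> M x.

End Ranked.

(* Main.v *)
Require Import Defs.
From mathcomp Require Import all_boot all_order all_algebra.
From Stdlib Require Import Classical ClassicalEpsilon FunctionalExtensionality PropExtensionality.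
Set Implicit Arguments. Unset Strict Implicit. Unset Printing Implicit Defensive.
Import GRing.Theory.
Local Open Scope ring_scope.

Section Main.
Variable V : zmodType.
Variable br : V -> V -> V.
Variable D : ranked_structure br.

Definition DefP k (P : seq V -> Prop) := Def D k (fun s => size s = k /\ P s).

Lemma DefP_ext k P Q : DefP k P -> (forall s, size s = k -> (P s <-> Q s)) -> DefP k Q.
Proof.
move=> h e; apply: (Def_ext h) => s; split.
- by case=> hs hp; split => //; apply/e.
- by case=> hs hp; split => //; apply/e.
Qed.

Lemma reindexP n (idx : seq nat) m A : size idx = n -> all (fun i => (i < m)%N) idx ->
  Def D n A -> DefP m (fun s => A (map (nth 0 s) idx)).
Proof.
move=> sz hall hA.
case: m hall => [|m'] hall.
  case: idx sz hall => [|i idx] //= sz _; subst n.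
  have := Def_reindex (fun i : 'I_0 => i) hA.
  by have -> : enum 'I_0 = [::] by apply: size0nil; rewrite size_enum_ord.
pose f := fun i : 'I_n => (inord (nth 0%N idx i) : 'I_m'.+1).
have E : forall s : seq V, [seq nth 0 s (f i) | i <- enum 'I_n] = map (nth 0 s) idx; last first.
  by have := Def_reindex f hA => h; apply: (Def_ext h) => s; rewrite E.
move=> s.
have -> : [seq nth 0 s (f i) | i <- enum 'I_n] = [seq nth 0 s (nth 0%N idx i) | i <- iota 0 n].
  rewrite -val_enum_ord -map_comp; apply: eq_map => i /=.
  rewrite /f inordK //.
  by apply: (allP hall); apply: mem_nth; rewrite sz.
by rewrite -{2}(mkseq_nth 0%N idx) /mkseq sz -map_comp.
Qed.

Inductive fm : Type :=
| FAdd of nat & nat & nat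
| FBr of nat & nat & nat
| FEq of nat & nat
| FCst of nat & V
| FIn of (V -> Prop) & nat
| FAnd of fm & fm
| FNot of fm
| FEx of fm.

Fixpoint sat (s : seq V) (f : fm) : Prop :=
  match f with
  | FAdd i j l => nth 0 s l = nth 0 s i + nth 0 s j
  | FBr i j l => nth 0 s l = br (nth 0 s i) (nth 0 s j)
  | FEq i j => nth 0 s i = nth 0 s j
  | FCst i c => nth 0 s i = c
  | FIn H i => H (nth 0 s i)
  | FAnd f g => sat s f /\ sat s g
  | FNot f => ~ sat s f
  | FEx f => exists y, sat (rcons s y) f
  end.

Fixpoint wf (k : nat) (f : fm) : Prop :=
  match f with
  | FAdd i j l => [/\ (i < k)%N, (j < k)%N & (l < k)%N]
  | FBr i j l => [/\ (i < k)%N, (j < k)%N & (l < k)%N]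
  | FEq i j => (i < k)%N /\ (j < k)%N
  | FCst i c => (i < k)%N
  | FIn H i => (i < k)%N /\ definable D H
  | FAnd f g => wf k f /\ wf k g
  | FNot f => wf k f
  | FEx f => wf k.+1 f
  end.

Lemma fm_def f : forall k, wf k f -> DefP k (fun s => sat s f).
Proof.
elim: f => [i j l|i j l|i j|i c|H i|f IHf g IHg|f IHf|f IHf] k /=.
- case=> hi hj hl.
  have hall : all (fun x => (x < k)%N) [:: i; j; l] by rewrite /= hi hj hl.
  have h := @reindexP 3 [:: i; j; l] k _ (erefl 3%N) hall (Def_add D). apply: (DefP_ext h) => s _ /=; split.
  + by case=> x [y [-> -> ->]].
  + by move=> ->; exists (nth 0 s i), (nth 0 s j).
- case=> hi hj hl.
  have hall : all (fun x => (x < k)%N) [:: i; j; l] by rewrite /= hi hj hl.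
  have h := @reindexP 3 [:: i; j; l] k _ (erefl 3%N) hall (Def_br D). apply: (DefP_ext h) => s _ /=; split.
  + by case=> x [y [-> -> ->]].
  + by move=> ->; exists (nth 0 s i), (nth 0 s j).
- case=> hi hj.
  have hall : all (fun x => (x < k)%N) [:: i; j] by rewrite /= hi hj.
  have h := @reindexP 2 [:: i; j] k _ (erefl 2%N) hall (Def_eq D). apply: (DefP_ext h) => s _ /=; split.
  + by case=> x [-> ->].
  + by move=> ->; exists (nth 0 s j).
- move=> hi.
  have hall : all (fun x => (x < k)%N) [:: i] by rewrite /= hi.
  have h := @reindexP 1 [:: i] k _ (erefl 1%N) hall (Def_const D c). apply: (DefP_ext h) => s _ /=; split.
  + by case=> ->.
  + by move=> ->.
- case=> hi hH.
  have hall : all (fun x => (x < k)%N) [:: i] by rewrite /= hi.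
  have h := @reindexP 1 [:: i] k _ (erefl 1%N) hall hH. apply: (DefP_ext h) => s _ /=; split.
  + by case=> x [[->]].
  + by move=> hx; exists (nth 0 s i).
- case=> hf hg.
  have := Def_inter (IHf _ hf) (IHg _ hg) => h.
  apply: (Def_ext h) => s; split.
  + by case=> [[? ?] [_ ?]].
  + by case=> ? [? ?].
- move=> hf.
  have := Def_compl (IHf _ hf) => h.
  apply: (Def_ext h) => s; split.
  + by case=> hs hn; split => // hp; apply: hn.
  + by case=> hs hn; split => // -[_ ?]; apply: hn.
- move=> hf.
  have h1 := IHf _ hf. rewrite /DefP -addn1 in h1.
  have := Def_proj h1 => h.
  apply: (Def_ext h) => s; split.
  + case=> hs [t [hst hsat]]; split => //.
    rewrite size_cat hs in hst.
    have : size t = 1%N by apply/eqP; rewrite -(eqn_add2l k) hst.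
    case: t hst hsat => [|y [|]] //= _ hsat _.
    by exists y; rewrite -cats1.
  + case=> hs [y hy]; split => //; exists [:: y]; rewrite cats1 size_rcons hs addn1.
    by split.
Qed.

Definition S1 (H : V -> Prop) := fun s : seq V => exists x, s = [:: x] /\ H x.

Lemma def_of_fm (H : V -> Prop) f : wf 1 f -> (forall x, sat [:: x] f <-> H x) -> definable D H.
Proof.
move=> hw he; have := fm_def hw => h.
apply: (Def_ext h) => s; split.
- case=> hs hsat; case: s hs hsat => [|x [|]] //= _ hsat.
  by exists x; split => //; apply/he.
- by case=> x [-> hx]; split => //; apply/he.
Qed.


Hypothesis hL : lie_ring br.

Lemma brDl x y z : br (x + y) z = br x z + br y z. Proof. by case: hL. Qed.
Lemma brDr x y z : br x (y + z) = br x y + br x z. Proof. by case: hL. Qed.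
Lemma brxx x : br x x = 0. Proof. by case: hL. Qed.
Lemma jacobi x y z : br x (br y z) + br y (br z x) + br z (br x y) = 0. Proof. by case: hL. Qed.
Lemma br0l x : br 0 x = 0.
Proof. by apply: (addrI (br 0 x)); rewrite addr0 -brDl addr0. Qed.
Lemma br0r x : br x 0 = 0.
Proof. by apply: (addrI (br x 0)); rewrite addr0 -brDr addr0. Qed.
Lemma brNl x y : br (- x) y = - br x y.
Proof. by apply: (addrI (br x y)); rewrite -brDl !subrr br0l. Qed.
Lemma brNr x y : br x (- y) = - br x y.
Proof. by apply: (addrI (br x y)); rewrite -brDr !subrr br0r. Qed.
Lemma brBl x y z : br (x - y) z = br x z - br y z. Proof. by rewrite brDl brNl. Qed.
Lemma brBr x y z : br x (y - z) = br x y - br x z. Proof. by rewrite brDr brNr. Qed.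
Lemma brC x y : br x y = - br y x.
Proof.
have := brxx (x + y); rewrite brDl !brDr !brxx add0r addr0 => /eqP.
by rewrite addr_eq0 => /eqP.
Qed.
Lemma jac2 a u v : br a (br u v) = br (br a u) v + br u (br a v).
Proof.
have := jacobi a u v => /eqP; rewrite -addrA addr_eq0 => /eqP ->.
rewrite (brC v a) brNr (brC v (br a u)) -opprD opprK addrC.
by [].
Qed.

Lemma sg0 (H : V -> Prop) : subgrp H -> H 0. Proof. by case. Qed.
Lemma sgB (H : V -> Prop) x y : subgrp H -> H x -> H y -> H (x - y). Proof. by case=> _ h; apply: h. Qed.
Lemma sgN (H : V -> Prop) x : subgrp H -> H x -> H (- x).
Proof. by move=> hH hx; rewrite -sub0r; apply: sgB => //; apply: sg0. Qed.
Lemma sgD (H : V -> Prop) x y : subgrp H -> H x -> H y -> H (x + y).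
Proof. by move=> hH hx hy; rewrite -(opprK y); apply: sgB => //; apply: sgN. Qed.

Definition rank (H : V -> Prop) := rk D (S1 H).

Lemma def_full : definable D (fun _ => True).
Proof. by apply: (@def_of_fm _ (FEq 0 0)). Qed.

Lemma def_inter (A B : V -> Prop) : definable D A -> definable D B -> definable D (fun x => A x /\ B x).
Proof. by move=> hA hB; apply: (@def_of_fm _ (FAnd (FIn A 0) (FIn B 0))). Qed.

Lemma def_zero : definable D (fun x => x = 0).
Proof. by apply: (@def_of_fm _ (FCst 0 0)). Qed.

Lemma def_shift (A : V -> Prop) a : definable D A -> definable D (fun x => A (x - a)).
Proof.
move=> hA; apply: (@def_of_fm _ (FEx (FEx (FAnd (FIn A 1) (FAnd (FCst 2 a) (FAdd 1 2 0)))))) => //= x.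
split.
- by case=> y [z [hy [-> ->]]]; rewrite addrK.
- by move=> h; exists (x - a), a; rewrite subrK.
Qed.

Lemma def_sum (A B : V -> Prop) : definable D A -> definable D B ->
  definable D (fun v => exists a b, [/\ A a, B b & v = a + b]).
Proof.
move=> hA hB; apply: (@def_of_fm _ (FEx (FEx (FAnd (FIn A 1) (FAnd (FIn B 2) (FAdd 1 2 0)))))) => //= x.
split.
- by case=> y [z [hy [hz ->]]]; exists y, z.
- by case=> y [z [hy hz ->]]; exists y, z.
Qed.

Lemma def_img a (B : V -> Prop) : definable D B -> definable D (fun v => exists b, B b /\ v = br a b).
Proof.
move=> hB; apply: (@def_of_fm _ (FEx (FEx (FAnd (FIn B 1) (FAnd (FCst 2 a) (FBr 2 1 0)))))) => //= x.
split.
- by case=> y [z [hy [-> ->]]]; exists y.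
- by case=> y [hy ->]; exists y, a.
Qed.

Lemma def_pre a (B K : V -> Prop) : definable D B -> definable D K -> definable D (fun b => B b /\ K (br a b)).
Proof.
move=> hB hK; apply: (@def_of_fm _ (FEx (FEx (FAnd (FIn B 0) (FAnd (FCst 1 a)
   (FAnd (FBr 1 0 2) (FIn K 2))))))) => //= x.
split.
- by case=> y [z [hx [-> [-> ?]]]].
- by case=> hx hk; exists a, (br a x).
Qed.

Lemma def_tw a (H I : V -> Prop) : definable D H -> definable D I ->
  definable D (fun v => exists h, H h /\ exists z, I z /\ v = h + br a h + z).
Proof.
move=> hH hI; apply: (@def_of_fm _ (FEx (FEx (FEx (FEx (FEx (FAnd (FIn H 1) (FAnd (FIn I 2)
  (FAnd (FCst 3 a) (FAnd (FBr 3 1 4) (FAnd (FAdd 1 4 5) (FAdd 5 2 0)))))))))))) => //= x.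
split.
- by case=> h [z [c [u [w [hh [hz [-> [-> [-> ->]]]]]]]]]; exists h; split => //; exists z.
- case=> h [hh [z [hz ->]]]; exists h, z, a, (br a h), (h + br a h); do !split => //.
Qed.

Lemma def_pretw a (H K : V -> Prop) : definable D H -> definable D K ->
  definable D (fun h => H h /\ K (h + br a h)).
Proof.
move=> hH hK; apply: (@def_of_fm _ (FEx (FEx (FEx (FAnd (FIn H 0) (FAnd (FCst 1 a)
  (FAnd (FBr 1 0 2) (FAnd (FAdd 0 2 3) (FIn K 3))))))))) => //= x.
split.
- by case=> c [u [w [hx [-> [-> [-> ?]]]]]].
- by case=> hx hk; exists a, (br a x), (x + br a x).
Qed.


Lemma S1_eta C : Def D 1 C -> C = S1 (fun x => C [:: x]).
Proof.
move=> hC; apply: functional_extensionality => s; apply: propositional_extensionality.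
split; last by case=> x [-> ?].
move=> hs; have := Def_size hC hs; case: s hs => [|x [|]] //= hs _.
by exists x.
Qed.

Lemma rank_le (A B : V -> Prop) : definable D A -> definable D B -> (forall x, A x -> B x) ->
  (exists x, A x) -> (rank A <= rank B)%N.
Proof.
move=> hA hB hAB [x0 hx0].
rewrite /rank; case E: (rk D (S1 A)) => [|n] //.
have ne : exists s, S1 A s by exists [:: x0], x0.
have neB : exists s, S1 B s by exists [:: x0], x0; split => //; apply: hAB.
have := proj1 (rk_mono n hA ne); rewrite E ltnSn => /(_ isT) [Bf [hB1 hB2]].
apply: (proj2 (rk_mono n hB neB)); exists Bf; split => // i.
case: (hB1 i) => ? ? hsub ?; split => // s /hsub [y [-> hy]].
by exists y; split => //; apply: hAB.
Qed.

Lemma rank_shift n : forall (A : V -> Prop) (a : V), definable D A -> (exists x, A x) ->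
  (n <= rank A)%N -> (n <= rank (fun x => A (x - a)%R))%N.
Proof.
elim: n => // n IH A a hA [x0 hx0] hn.
have ne : exists s, S1 A s by exists [:: x0], x0.
have ne' : exists s, S1 (fun x => A (x - a)) s by exists [:: x0 + a], (x0 + a); rewrite addrK.
have [Bf [hB1 hB2]] := proj1 (rk_mono n hA ne) hn.
apply: (proj2 (rk_mono n (def_shift a hA) ne')).
exists (fun i => S1 (fun x => Bf i [:: x - a])); split.
- move=> i; case: (hB1 i) => hd [s hs] hsub hr.
  have E := S1_eta hd.
  rewrite E in hd hr hs.
  case: hs => y [_ hy].
  split.
  + exact: def_shift a hd.
  + by exists [:: y + a], (y + a); rewrite addrK.
  + move=> s' [x [-> hx]]; exists x; split => //.
    have : S1 A [:: x - a] by apply: hsub; rewrite E; exists (x - a).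
    by case=> z [[->]].
  + by apply: (IH (fun x => Bf i [:: x]) a) => //; exists y.
- move=> i j s hij [x [-> hx]] [x' [[<-] hx']].
  by apply: (hB2 i j [:: x - a]).
Qed.

Lemma not_fi_seq (A B : V -> Prop) : ~ finite_index A B ->
  forall s : seq V, exists x, B x /\ forall a, a \in s -> ~ A (x - a).
Proof.
move=> hfi s; apply: NNPP => H1; apply: hfi; exists s => x hx.
apply: NNPP => H2; apply: H1; exists x; split => // a ha hA; apply: H2; exists a; by split.
Qed.

Lemma rank_lt (A B : V -> Prop) : definable D A -> definable D B -> subgrp A -> subgrp B ->
  (forall x, A x -> B x) -> ~ finite_index A B -> (rank A < rank B)%N.
Proof.
move=> hA hB sA sB hAB hfi.
have hs := not_fi_seq hfi.
pose F (s : seq V) := epsilon (inhabits (0 : V)) (fun x => B x /\ forall a, a \in s -> ~ A (x - a)).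
have hF : forall s : seq V, B (F s) /\ forall a, a \in s -> ~ A (F s - a).
  by move=> s; exact: (epsilon_spec (inhabits (0 : V)) (fun x => B x /\ forall a, a \in s -> ~ A (x - a)) (hs s)).
pose L n := iter n (fun s => rcons s (F s)) [::].
pose a n := F (L n).
have haL : forall i j, (j < i)%N -> a j \in L i.
  elim=> // i IHi j; rewrite ltnS leq_eqVlt => /orP [/eqP -> | hj].
    by rewrite /= mem_rcons mem_head.
  by rewrite /= mem_rcons in_cons (IHi _ hj) orbT.
have hsep : forall i j, (j < i)%N -> ~ A (a i - a j).
  by move=> i j hji; apply: (proj2 (hF (L i))); apply: haL.
have ne : exists s, S1 B s by exists [:: 0], 0; split => //; apply: sg0.
apply: (proj2 (rk_mono (rank A) hB ne)).
exists (fun i => S1 (fun x => A (x - a i))); split.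
- move=> i; split.
  + exact: def_shift.
  + by exists [:: a i], (a i); rewrite subrr; split => //; apply: sg0.
  + move=> s [x [-> hx]]; exists x; split => //.
    rewrite -(subrK (a i) x); apply: sgD => //; first by apply: hAB.
    exact: (proj1 (hF (L i))).
  + by apply: rank_shift => //; exists 0; apply: sg0.
- move=> i j s hij [x [-> hx]] [x' [[<-] hx']].
  case: (ltngtP i j) => hc.
  + apply: (hsep _ _ hc).
    have E : (x - a i) - (x - a j) = a j - a i by rewrite opprB addrC addrA subrK.
    rewrite -E.
    by apply: sgB.
  + apply: (hsep _ _ hc).
    have E : (x - a j) - (x - a i) = a i - a j by rewrite opprB addrC addrA subrK.
    rewrite -E.
    by apply: sgB.
  + by apply: hij.
Qed.

Lemma conn_rank (A B : V -> Prop) : definable D A -> definable D B -> subgrp A -> subgrp B ->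
  connected D B -> (forall x, A x -> B x) -> (rank B <= rank A)%N -> forall x, B x -> A x.
Proof.
move=> hA hB sA sB cB hAB hr.
apply: cB => //.
apply: NNPP => hfi.
have := rank_lt hA hB sA sB hAB hfi.
by rewrite ltnNge hr.
Qed.


Definition additive (f : V -> V) := forall x y, f (x - y) = f x - f y.

Lemma fi_pull (f : V -> V) (A K H : V -> Prop) : additive f -> subgrp A -> subgrp K ->
  (forall a, A a -> H (f a)) -> finite_index K H ->
  finite_index (fun a => A a /\ K (f a)) A.
Proof.
move=> hf sA sK hAH [s hs].
pose g (r : V) := epsilon (inhabits (0 : V)) (fun a => A a /\ K (f a - r)).
exists (map g s) => a ha.
have [r [hr hK]] := hs _ (hAH _ ha).
have [hg1 hg2] : A (g r) /\ K (f (g r) - r).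
  by apply: (epsilon_spec (inhabits (0 : V)) (fun a => A a /\ K (f a - r))); exists a.
exists (g r); split; first by apply: map_f.
split; first by apply: sgB.
have -> : f (a - g r) = (f a - r) - (f (g r) - r).
  by rewrite hf opprB addrC addrA subrK addrC.
by apply: sgB.
Qed.

Definition image (f : V -> V) (A : V -> Prop) := fun y => exists a, A a /\ y = f a.

Lemma additive0 f : additive f -> f 0 = 0.
Proof. by move=> hf; have h := hf 0 0; rewrite !subrr in h. Qed.

Lemma sg_image f A : additive f -> subgrp A -> subgrp (image f A).
Proof.
move=> hf sA; split; first by exists 0; split; [apply: sg0 | rewrite additive0].
move=> x y [a [ha ->]] [b [hb ->]]; exists (a - b); split; [by apply: sgB | by rewrite hf].
Qed.

Lemma conn_image f (A : V -> Prop) : additive f -> subgrp A -> connected D A ->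
  (forall K, definable D K -> definable D (fun a => A a /\ K (f a))) ->
  connected D (image f A).
Proof.
move=> hf sA cA hdef K hK sK hKI hfi y [a [ha ->]].
have sP : subgrp (fun a => A a /\ K (f a)).
  split; first by split; [apply: sg0 | rewrite additive0 //; apply: sg0].
  move=> x z [hx kx] [hz kz]; split; [by apply: sgB | by rewrite hf; apply: sgB].
have := cA _ (hdef _ hK) sP (fun x => @proj1 _ _) (fi_pull hf sA sK (fun a ha => ex_intro _ a (conj ha erefl)) hfi).
by move=> /(_ a ha) [].
Qed.

Definition sumset (A B : V -> Prop) := fun v => exists a b, [/\ A a, B b & v = a + b].

Lemma sg_sum A B : subgrp A -> subgrp B -> subgrp (sumset A B).
Proof.
move=> sA sB; split; first by exists 0, 0; split; [apply: sg0 | apply: sg0 | rewrite addr0].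
move=> x y [a [b [ha hb ->]]] [a' [b' [ha' hb' ->]]].
exists (a - a'), (b - b'); split; [by apply: sgB | by apply: sgB |].
by rewrite opprD addrACA.
Qed.

Lemma sg_inter (A B : V -> Prop) : subgrp A -> subgrp B -> subgrp (fun x => A x /\ B x).
Proof.
by move=> sA sB; split; [split; apply: sg0 | move=> x y [? ?] [? ?]; split; apply: sgB].
Qed.

Lemma conn_sum (A B : V -> Prop) : definable D A -> definable D B -> subgrp A -> subgrp B ->
  connected D A -> connected D B -> connected D (sumset A B).
Proof.
move=> dA dB sA sB cA cB K dK sK hKS hfi.
have hid : additive id by [].
have hA : forall a, A a -> K a.
  move=> a ha; have := cA _ (def_inter dA dK) (sg_inter sA sK) (fun x => @proj1 _ _)
    (@fi_pull id A K _ hid sA sK (fun a ha => ex_intro _ a (ex_intro _ 0 (And3 ha (sg0 sB) (esym (addr0 a))))) hfi) a ha.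
  by case.
have hB : forall b, B b -> K b.
  move=> b hb; have := cB _ (def_inter dB dK) (sg_inter sB sK) (fun x => @proj1 _ _)
    (@fi_pull id B K _ hid sB sK (fun b hb => ex_intro _ 0 (ex_intro _ b (And3 (sg0 sA) hb (esym (add0r b))))) hfi) b hb.
  by case.
by move=> v [a [b [ha hb ->]]]; apply: sgD; [ | apply: hA | apply: hB].
Qed.

Lemma def_sumset A B : definable D A -> definable D B -> definable D (sumset A B).
Proof. exact: def_sum. Qed.

Lemma ex_max (P : nat -> Prop) N : (exists n, P n) -> (forall n, P n -> (n <= N)%N) ->
  exists n, P n /\ forall m, P m -> (m <= n)%N.
Proof.
elim: N => [|N IH] hex hb.
  case: hex => n hn; exists n; split => // m /hb; rewrite leqn0 => /eqP ->; done.
case: (classic (P N.+1)) => h; first by exists N.+1; split.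
apply: IH => // n hn; have := hb _ hn; rewrite leq_eqVlt => /orP [/eqP e|] //.
by rewrite e in hn.
Qed.


Definition zeroset := fun x : V => x = 0.

Lemma zero_props : [/\ definable D zeroset, subgrp zeroset & connected D zeroset].
Proof.
split; first exact: def_zero.
- by split => // x y -> ->; rewrite subrr.
- by move=> K _ sK _ _ x ->; apply: sg0.
Qed.

Definition Ssum (B : V -> Prop) (s : seq V) :=
  foldr (fun a S => sumset (image (br a) B) S) zeroset s.

Lemma img_props a (B : V -> Prop) : definable D B -> subgrp B -> connected D B ->
  [/\ definable D (image (br a) B), subgrp (image (br a) B) & connected D (image (br a) B)].
Proof.
move=> dB sB cB; have hf : additive (br a) by move=> x y; rewrite brBr.
split; first exact: def_img.
- exact: sg_image.
- apply: conn_image => // K dK; exact: def_pre.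
Qed.

Lemma Ssum_props (B : V -> Prop) s : definable D B -> subgrp B -> connected D B ->
  [/\ definable D (Ssum B s), subgrp (Ssum B s) & connected D (Ssum B s)].
Proof.
move=> dB sB cB; elim: s => [|a s [d1 s1 c1]] /=; first exact: zero_props.
have [d2 s2 c2] := img_props a dB sB cB.
split; [exact: def_sumset | exact: sg_sum | exact: conn_sum].
Qed.

Lemma sg_span (A B : V -> Prop) : subgrp (bracket_span br A B).
Proof.
split; first by move=> K sK _; apply: sg0.
by move=> x y hx hy K sK hK; apply: sgB => //; [apply: hx | apply: hy].
Qed.

Lemma span_br (A B : V -> Prop) a b : A a -> B b -> bracket_span br A B (br a b).
Proof. by move=> ha hb K sK hK; apply: hK. Qed.

Lemma Ssum_span (A B : V -> Prop) s : (forall a, a \in s -> A a) ->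
  forall v, Ssum B s v -> bracket_span br A B v.
Proof.
elim: s => [|a s IH] hs v /=; first by move=> ->; apply: (sg0 (sg_span A B)).
case=> u [w [[b [hb ->]] hw ->]].
apply: (sgD (sg_span A B)).
- by apply: span_br => //; apply: hs; rewrite mem_head.
- by apply: IH => // x hx; apply: hs; rewrite in_cons hx orbT.
Qed.

Lemma span_dc (A B : V -> Prop) : definable D B -> subgrp B -> connected D B ->
  definable D (bracket_span br A B) /\ connected D (bracket_span br A B).
Proof.
move=> dB sB cB.
pose P n := exists s, (forall a, a \in s -> A a) /\ rank (Ssum B s) = n.
have [n [[s0 [hs0 hr0]] hmax]] : exists n, P n /\ forall m, P m -> (m <= n)%N.
  apply: (@ex_max _ (rank (fun _ => True))); first by exists (rank (Ssum B [::])), [::].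
  move=> n [s [_ <-]]; have [d1 s1 _] := Ssum_props s dB sB cB.
  apply: rank_le => //; first exact: def_full.
  by exists 0; apply: sg0.
have [d0 sg0' c0] := Ssum_props s0 dB sB cB.
have key : forall a b, A a -> B b -> Ssum B s0 (br a b).
  move=> a b ha hb.
  have [d1 s1 c1] := Ssum_props (a :: s0) dB sB cB.
  have sub : forall v, Ssum B s0 v -> Ssum B (a :: s0) v.
    move=> v hv; exists 0, v; split => //; last by rewrite add0r.
    by exists 0; split; [apply: sg0 | rewrite br0r].
  have := @conn_rank (Ssum B s0) (Ssum B (a :: s0)) d0 d1 sg0' s1 c1 sub.
  apply.
  - rewrite hr0; apply: hmax; exists (a :: s0); split => // x.
    by rewrite in_cons => /orP [/eqP -> | /hs0].
  - exists (br a b), 0; split => //; last by rewrite addr0.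
    + by exists b.
    + exact: sg0.
have E : bracket_span br A B = Ssum B s0.
  apply: functional_extensionality => v; apply: propositional_extensionality; split.
  - by move=> hv; apply: hv => // a b ha hb; apply: key.
  - exact: Ssum_span.
by rewrite E.
Qed.

Lemma R1 (h d z e f z' : V) : (h + d + z) - (d + e + f) + z' = h + (z - e - f + z').
Proof. by rewrite !opprD !addrA (addrAC h d z) addrK -!addrA. Qed.
Lemma R2 (h d e : V) : (h + d) - (d + e) + e = h.
Proof. by rewrite opprD addrA addrK subrK. Qed.
Lemma R3 (v d e : V) : (v - d) + (d - e) + e = v.
Proof. by rewrite addrA subrK subrK. Qed.
Lemma R4 (h1 d1 z1 h2 d2 z2 : V) : (h1 + d1 + z1) - (h2 + d2 + z2) = (h1 - h2) + (d1 - d2) + (z1 - z2).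
Proof. by rewrite !opprD addrACA (addrACA h1). Qed.
Lemma R6 (z u u' : V) : (z - u) + (u - u') = z - u'.
Proof. by rewrite addrA subrK. Qed.
Lemma R5 (x1 x2 x3 x4 x5 x6 : V) : x1 + x2 + x3 + x4 + x5 + x6 = x1 + (x3 + x2) + (x4 + x6 + x5).
Proof. by rewrite !addrA (addrAC x1 x2 x3) (addrAC _ x5 x6). Qed.

Section Twist.
Variables (N I : V -> Prop).
Hypothesis sN : subgrp N.
Hypothesis sI : subgrp I.
Hypothesis dI : definable D I.
Hypothesis hNbr : forall u v, N (br u v).
Hypothesis hIid : forall v i, I i -> I (br v i).
Hypothesis hNN : forall u v, N u -> N v -> I (br u v).
Hypothesis hnil : forall a z, N a -> I z -> exists c, iter c (fun w => - br a w) z = 0.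

Definition Tw a (H : V -> Prop) := fun v => exists h, H h /\ exists z, I z /\ v = h + br a h + z.

Lemma tw_sg a H : subgrp H -> subgrp (Tw a H).
Proof.
move=> sH; split.
  by exists 0; split; [apply: sg0 | exists 0; split; [apply: sg0 | rewrite br0r !addr0]].
move=> x y [h1 [hh1 [z1 [hz1 ->]]]] [h2 [hh2 [z2 [hz2 ->]]]].
exists (h1 - h2); split; first by apply: sgB.
exists (z1 - z2); split; first by apply: sgB.
by rewrite R4 brBr.
Qed.

Lemma tw_I a (H : V -> Prop) : subgrp H -> forall z, I z -> Tw a H z.
Proof.
by move=> sH z hz; exists 0; split; [apply: sg0 | exists z; split => //; rewrite br0r !add0r].
Qed.

Lemma tw_mono a (H H' : V -> Prop) : (forall x, H x -> H' x) -> forall x, Tw a H x -> Tw a H' x.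
Proof. by move=> hs x [h [hh rest]]; exists h; split => //; apply: hs. Qed.

Lemma tw_ring a H : subring br H -> (forall z, I z -> H z) -> subring br (Tw a H).
Proof.
case=> sH rH hIH; split; first exact: tw_sg.
move=> x y [h1 [hh1 [z1 [hz1 ->]]]] [h2 [hh2 [z2 [hz2 ->]]]].
exists (br h1 h2); split; first by apply: rH.
set d1 := br a h1; set d2 := br a h2; set p1 := h1 + d1; set p2 := h2 + d2.
exists (br d1 d2 + br z1 (p2 + z2) + br p1 z2); split.
  apply: sgD => //; last by apply: hIid.
  apply: sgD => //; first by apply: hNN; apply: hNbr.
  by rewrite brC; apply: sgN => //; apply: hIid.
rewrite jac2 (brDl p1 z1) (brDr p1 p2 z2) {1}/p1 {1}/p2 (brDl h1 d1) !(brDr _ h2 d2).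
by rewrite -/d1 -/d2 (addrA (br h1 h2 + br h1 d2)) R5.
Qed.

Lemma tw_def a H : definable D H -> definable D (Tw a H).
Proof. by move=> dH; apply: def_tw. Qed.

Lemma tw_full a : N a -> forall v, Tw a (fun _ => True) v.
Proof.
move=> ha v; exists (v - br a v); split => //; exists (br a (br a v)); split.
  by apply: hNN => //; apply: hNbr.
by rewrite brBr R3.
Qed.

Lemma tw_inv a (H : V -> Prop) : N a -> subgrp H -> (forall z, I z -> H z) ->
  Tw (- a) (Tw a H) = H.
Proof.
move=> ha sH hIH; apply: functional_extensionality => v; apply: propositional_extensionality; split.
- case=> w [[h [hh [z [hz ->]]]] [z' [hz' ->]]].
  rewrite brNl !brDr R1; apply: sgD => //; apply: hIH.
  apply: sgD => //; apply: sgB => //; [apply: sgB => // | by apply: hIid].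
  by apply: hNN => //; apply: hNbr.
- move=> hv; exists (v + br a v); split.
    by exists v; split => //; exists 0; split; [apply: sg0 | rewrite addr0].
  exists (br a (br a v)); split; first by apply: hNN => //; apply: hNbr.
  by rewrite brNl brDr R2.
Qed.

Lemma tw_conn a H : N a -> definable D H -> subgrp H -> connected D H ->
  (forall z, I z -> H z) -> connected D (Tw a H).
Proof.
move=> ha dH sH cH hIH K dK sK hKT hfi.
pose f := fun h => h + br a h.
have hf : additive f by move=> x y; rewrite /f brBr opprD addrACA.
have hfH : forall h, H h -> Tw a H (f h).
  by move=> h hh; exists h; split => //; exists 0; split; [apply: sg0 | rewrite addr0].
have sP : subgrp (fun h => H h /\ K (f h)).
  split; first by split; [apply: sg0 | rewrite /f br0r addr0; apply: sg0].
  by move=> x y [? ?] [? ?]; split; [apply: sgB | rewrite hf; apply: sgB].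
have hP := cH _ (def_pretw a dH dK) sP (fun x => @proj1 _ _) (fi_pull hf sH sK hfH hfi).
have hKz : forall z, I z -> K z.
  move=> z hz; have [c hc] := hnil ha hz.
  pose u j := iter j (fun w => - br a w) z.
  have hu : forall j, I (u j) /\ K (z - u j).
    elim=> [|j [IHi IHk]]; first by split => //; rewrite /u /= subrr; apply: sg0.
    have e : u j.+1 = - br a (u j) by [].
    split; first by rewrite e; apply: sgN => //; apply: hIid.
    rewrite -(R6 z (u j)); apply: sgD => //.
    have -> : u j - u j.+1 = f (u j) by rewrite e opprK.
    by case: (hP (u j) (hIH _ IHi)).
  by have := proj2 (hu c); rewrite /u hc subr0.
move=> v [h [hh [z [hz ->]]]]; apply: sgD => //; last by apply: hKz.
by case: (hP h hh).
Qed.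

End Twist.


Lemma span_ideal (A B : V -> Prop) : (forall x a, A a -> A (br x a)) ->
  (forall x b, B b -> B (br x b)) ->
  forall x z, bracket_span br A B z -> bracket_span br A B (br x z).
Proof.
move=> hA hB x z hz.
have sS := sg_span A B.
suff : bracket_span br A B z /\ forall x, bracket_span br A B (br x z) by case=> _; apply.
apply: (hz (fun z => bracket_span br A B z /\ forall x, bracket_span br A B (br x z))).
  split.
    by split; [apply: (sg0 sS) | move=> x'; rewrite br0r; apply: (sg0 sS)].
  move=> u v [hu hu'] [hv hv']; split; first by apply: (sgB sS).
  by move=> x'; rewrite brBr; apply: (sgB sS).
move=> a b ha hb; split; first by apply: span_br.
move=> x'; rewrite jac2; apply: (sgD sS) => //.
- by apply: span_br => //; apply: hA.
- by apply: span_br => //; apply: hB.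
Qed.

Lemma find_step (P : nat -> Prop) c : P c -> ~ P 0 -> exists k, ~ P k /\ P k.+1.
Proof.
elim: c => [|c IH] hc h0; first by [].
case: (classic (P c)) => h; first by apply: IH.
by exists c.
Qed.

Lemma main_sec : connected D (fun _ => True) -> nilpotent br (derived br 1) -> ideal br (frattini D).
Proof.
move=> hc [cn hcn].
set N := derived br 1.
have sT : subgrp (fun _ : V => True) by [].
have [dN cN] : definable D N /\ connected D N := span_dc _ def_full sT hc.
have sN : subgrp N := sg_span _ _.
have hNbr : forall u v, N (br u v) by move=> u v; apply: span_br.
have hlcs : forall j, [/\ definable D (lcs br N j), connected D (lcs br N j), subgrp (lcs br N j),
    (forall w, lcs br N j w -> N w) & (forall x w, lcs br N j w -> lcs br N j (br x w))].
  elim=> [|j [dj cj sj nj ij]] /=; first by split => // x w _; apply: hNbr.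
  have [dj' cj'] := span_dc N dj sj cj.
  split => //; first exact: sg_span.
    by move=> w hw; apply: hw => // a b _ _; apply: hNbr.
  by apply: span_ideal => // x a _; apply: hNbr.
have hstep : forall j a w, N a -> lcs br N j w -> lcs br N j.+1 (br a w).
  by move=> j a w ha hw; apply: span_br.
split.
  split; first by move=> M [[_ [sM _] _] _ _]; apply: sg0.
  by move=> x y hx hy M hM; case: (hM) => [[_ [sM _] _] _ _]; apply: sgB => //; [apply: hx | apply: hy].
move=> x y hy M hM.
case: (hM) => [[dM [sM rM] cM] pM maxM].
case: (classic (forall z, N z -> M z)) => hNM; first by apply: hNM; apply: hNbr.
pose P k := forall z, lcs br N k z -> M z.
have [k [nPk Pk1]] : exists k, ~ P k /\ P k.+1.
  apply: (@find_step P cn) => //.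
  by move=> z /hcn ->; apply: sg0.
have [dT cT sTk TN Tid] := hlcs k.
set T := lcs br N k in dT cT sTk TN Tid nPk.
have TM : ~ (forall z, T z -> M z) by [].
pose I := fun z => M z /\ N z.
have dI : definable D I := def_inter dM dN.
have sI : subgrp I := sg_inter sM sN.
have rMT : subring br (sumset M T).
  split; first exact: sg_sum.
  move=> u v [m1 [t1 [hm1 ht1 ->]]] [m2 [t2 [hm2 ht2 ->]]].
  exists (br m1 m2), (br m1 t2 + br t1 (m2 + t2)); split.
  - by apply: rM.
  - apply: sgD => //; first by apply: Tid.
    by rewrite brC; apply: sgN => //; apply: Tid.
  - by rewrite brDl brDr addrA.
have hMT : forall v, sumset M T v.
  move=> v; apply: NNPP => hv.
  have := maxM (sumset M T) (And3 (def_sumset dM dT) rMT (conn_sum dM dT sM sTk cM cT))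
    (ex_intro _ v hv).
  move=> h; apply: TM => z hz; apply: h.
    by move=> w hw; exists w, 0; split => //; [apply: sg0 | rewrite addr0].
  by exists 0, z; split => //; [apply: sg0 | rewrite add0r].
have hTI : forall t n, T t -> N n -> I (br t n).
  move=> t n ht hn; rewrite brC; apply: sgN => //; split; last exact: hNbr.
  by apply: Pk1; apply: hstep.
have hIid : forall v i, I i -> I (br v i).
  move=> v i hi; have [m [t [hm ht ->]]] := hMT v.
  rewrite brDl; apply: sgD => //; last by apply: hTI => //; case: hi.
  by split; [apply: rM => //; case: hi | apply: hNbr].
have hNN : forall u v, N u -> N v -> I (br u v).
  move=> u v hu hv; have [m [t [hm ht E]]] := hMT u.
  have hmI : I m.
    split => //; have -> : m = u - t by rewrite E addrK.
    by apply: (sgB sN) => //; apply: TN.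
  rewrite E brDl; apply: (sgD sI) => //; last by apply: hTI.
  by rewrite brC; apply: (sgN sI) => //; apply: hIid.
have hnil : forall a z, N a -> I z -> exists c, iter c (fun w => - br a w) z = 0.
  move=> a z ha [_ hz]; exists cn; apply: hcn.
  elim: cn => [|j IHj] //=.
  have [_ _ sj1 _ _] := hlcs j.+1.
  by apply: (sgN sj1) => //; apply: hstep.
have hIM : forall z, I z -> M z by move=> z [].
have [m0 [t0 [hm0 ht0 ->]]] := hMT x.
have ht0N : N t0 := TN _ ht0.
have Einv : Tw I (- t0) (Tw I t0 M) = M := @tw_inv N I sI hNbr hIid hNN t0 M ht0N sM hIM.
have hnt : N (- t0) by apply: (sgN sN).
have hMt : maximal_def_conn D (Tw I t0 M).
  split.
  - split; first exact: (@tw_def I dI t0 M dM).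
    + exact: (@tw_ring N I sI hNbr hIid hNN t0 M (conj sM rM) hIM).
    + exact: (@tw_conn N I sI hIid hnil t0 M ht0N dM sM cM hIM).
  - apply: NNPP => hnp; case: pM => y0; apply.
    rewrite -Einv; apply: (@tw_mono I (- t0) (fun _ => True)).
      by move=> z _; apply: NNPP => hz; apply: hnp; exists z.
    exact: (@tw_full N I hNbr hNN (- t0) hnt).
  - move=> K [dK [sK rK] cK] pK hsub v hv.
    have hIK : forall z, I z -> K z by move=> z hz; apply: hsub; apply: (@tw_I I t0 M sM).
    have EK : Tw I t0 (Tw I (- t0) K) = K.
      by have := @tw_inv N I sI hNbr hIid hNN (- t0) K hnt sK hIK; rewrite opprK.
    have hK' : forall w, Tw I (- t0) K w -> M w.
      apply: maxM.
      + split; first exact: (@tw_def I dI (- t0) K dK).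
        * exact: (@tw_ring N I sI hNbr hIid hNN (- t0) K (conj sK rK) hIK).
        * exact: (@tw_conn N I sI hIid hnil (- t0) K hnt dK sK cK hIK).
      + apply: NNPP => hnp; case: pK => y0; apply.
        rewrite -EK; apply: (@tw_mono I t0 (fun _ => True)).
          by move=> z _; apply: NNPP => hz; apply: hnp; exists z.
        exact: (@tw_full N I hNbr hNN t0 ht0N).
      + by move=> w hw; rewrite -Einv in hw; apply: (@tw_mono I (- t0) _ _ hsub).
    by rewrite -EK in hv; apply: (@tw_mono I t0 _ _ hK').
have hyM := hy M hM.
have [h [hh [z [hz Ey]]]] := hy _ hMt.
have hzN : N z by case: hz.
have E1 : y - h = br t0 h + z by rewrite Ey addrAC (addrC h) addrK.
have E2 : br t0 h = (y - h) - z by rewrite E1 addrK.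
have hyh : I (y - h).
  split; first by apply: (sgB sM).
  by rewrite E1; apply: (sgD sN).
rewrite brDl; apply: (sgD sM); first by apply: rM.
rewrite -(subrK h y) brDr; apply: (sgD sM); first by apply: hIM; apply: hIid.
by rewrite E2; apply: hIM; apply: (sgB sI).
Qed.

End Main.

Theorem mainTheorem11 (V : zmodType) (br : V -> V -> V) (D : ranked_structure br) :
  lie_ring br ->
  connected D (fun _ => True) ->
  soluble br ->
  nilpotent br (derived br 1) ->
  ideal br (frattini D).
Proof. by move=> hL hc _ hn; apply: main_sec. Qed.
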